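(* Let $(X,\Sigma,\mu)$ be a semi-finite measure space and $A\in\Sigma$. Then: (i) the restriction of $\sigma(L^1,L^\infty)$ to $L^1(A)$ equals $\sigma(L^1(A),L^\infty(A))$, and the restriction of $\tau(L^\infty,L^1)$ to $L^\infty(A)$ equals $\tau(L^\infty(A),L^1(A))$, where these are the weak, resp. Mackey, topologies arising from the duality $\langle L^1(A),L^\infty(A)\rangle$; (ii) the order topology $\tau_O(L^\infty(A))$ equals the restriction of $\tau_O(L^\infty)$ to $L^\infty(A)$.
   Context: $L^\infty$, $L^1$ are the real spaces of essentially bounded, resp. integrable, functions, with duality $\langle f,g\rangle=\int fg\,d\mu$; $\sigma(\cdot,\cdot)$ and $\tau(\cdot,\cdot)$ denote weak and Mackey topologies of a duality. $L^\infty(A):=\{f\chi_A:f\in L^\infty\}$ and $L^1(A):=\{f\chi_A:f\in L^1\}$, identified with $L^\infty(A,\Sigma_A,\mu_A)$ and $L^1(A,\Sigma_A,\mu_A)$ where $\Sigma_A=\{A\cap E:E\in\Sigma\}$, $\mu_A=\mu|_{\Sigma_A}$. For a Riesz space $E$ (here with a.e. pointwise order), $\tau_O(E)$ is the topology whose closed sets are the sets $F$ such that no net in $F$ order converges to a point outside $F$, where $(x_\gamma)_{\gamma\in\Gamma}$ order converges to $x$ if there are nets $(y_\gamma)_{\gamma\in\Gamma}$ increasing with supremum $x$ and $(z_\gamma)_{\gamma\in\Gamma}$ decreasing with infimum $x$ with eventually $y_\gamma\le x_\gamma\le z_\gamma$. Restrictions mean subspace topologies. *)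

(* Defs.v *)
From HB Require Import structures.
From mathcomp Require Import all_boot all_order all_algebra.
From mathcomp Require Import all_classical all_reals all_analysis.
Set Implicit Arguments.
Unset Strict Implicit.
Unset Printing Implicit Defensive.
Import Order.TTheory GRing.Theory Num.Theory.
Local Open Scope classical_set_scope.
Local Open Scope ring_scope.

(* Elements of L^1, L^oo are represented by (measurable) functions T -> R;
   all sets of representatives considered below are saturated for
   a.e.-equality, and all topologies below only have a.e.-saturated open
   (closed) sets, so they are exactly the topologies on the quotient spaces. *)

Section Lspaces.
Context {d : measure_display} {T : measurableType d} {R : realType}.
Variable mu : {measure set T -> \bar R}.

Definition semi_finite : Prop :=
  forall E : set T, measurable E -> mu E = +oo%E ->
    exists F : set T, [/\ measurable F, F `<=` E & (0 < mu F < +oo)%E].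

Definition ae_le (f g : T -> R) : Prop := {ae mu, forall x, f x <= g x}.

Definition Linf : set (T -> R) :=
  [set f : T -> R | measurable_fun setT f /\ exists M : R, {ae mu, forall x, `|f x| <= M}].
Definition L1 : set (T -> R) :=
  [set f : T -> R | mu.-integrable setT (EFin \o f)].

(* L^oo(A), L^1(A): elements vanishing a.e. off A *)
Definition Linf_on (A : set T) : set (T -> R) :=
  [set f : T -> R | Linf f /\ {ae mu, forall x, ~ A x -> f x = 0}].
Definition L1_on (A : set T) : set (T -> R) :=
  [set f : T -> R | L1 f /\ {ae mu, forall x, ~ A x -> f x = 0}].

Definition pairing (f g : T -> R) : R := Rintegral mu setT (fun x => f x * g x).

Definition seminorm_topology (S : set (T -> R)) (P : set ((T -> R) -> R))
  : set (set (T -> R)) :=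
  [set U | U `<=` S /\
     forall f, U f -> exists (ps : seq ((T -> R) -> R)) (e : R),
       [/\ (forall p, p \in ps -> P p), 0 < e &
          [set g | S g /\ forall p, p \in ps -> p (g \- f) < e] `<=` U]].

Definition weak_top (E F : set (T -> R)) : set (set (T -> R)) :=
  seminorm_topology E [set p | exists g, F g /\ p = (fun f => `|pairing f g|)].

Definition compact_wrt (O : set (set (T -> R))) (K : set (T -> R)) : Prop :=
  forall C : set (set (T -> R)), C `<=` O -> K `<=` \bigcup_(U in C) U ->
    exists s : seq (set (T -> R)),
      (forall U, U \in s -> C U) /\ K `<=` \bigcup_(U in [set U | U \in s]) U.

Definition absolutely_convex (K : set (T -> R)) : Prop :=
  forall f g (a b : R), K f -> K g -> `|a| + `|b| <= 1 ->
    K (fun x => a * f x + b * g x).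

Definition mackey_top (E F : set (T -> R)) : set (set (T -> R)) :=
  seminorm_topology E
    [set p | exists K, [/\ K `<=` F, absolutely_convex K,
                        compact_wrt (weak_top F E) K &
                        p = (fun f => sup [set `|pairing f g| | g in K])]].

Definition restrict_top (O : set (set (T -> R))) (S : set (T -> R))
  : set (set (T -> R)) :=
  [set V | exists U, O U /\ V = U `&` S].

Definition directed (I : Type) (le : I -> I -> Prop) : Prop :=
  [/\ (forall i, le i i), (forall i j k, le i j -> le j k -> le i k),
      inhabited I & (forall i j, exists k, le i k /\ le j k)].

Definition is_sup_in (E : set (T -> R)) (I : Type) (y : I -> T -> R)
  (p : T -> R) : Prop :=
  [/\ E p, (forall i, ae_le (y i) p) &
      (forall q, E q -> (forall i, ae_le (y i) q) -> ae_le p q)].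

Definition is_inf_in (E : set (T -> R)) (I : Type) (z : I -> T -> R)
  (p : T -> R) : Prop :=
  [/\ E p, (forall i, ae_le p (z i)) &
      (forall q, E q -> (forall i, ae_le q (z i)) -> ae_le q p)].

Definition order_converges (E : set (T -> R)) (I : Type) (le : I -> I -> Prop)
  (x : I -> T -> R) (p : T -> R) : Prop :=
  exists (y z : I -> T -> R),
    [/\ (forall i, E (y i) /\ E (z i)),
        (forall i j, le i j -> ae_le (y i) (y j)) /\ is_sup_in E y p,
        (forall i j, le i j -> ae_le (z j) (z i)) /\ is_inf_in E z p &
        exists i0, forall i, le i0 i -> ae_le (y i) (x i) /\ ae_le (x i) (z i)].

Definition order_closed (E F : set (T -> R)) : Prop :=
  F `<=` E /\
  forall (I : Type) (le : I -> I -> Prop) (x : I -> T -> R) (p : T -> R),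
    directed le -> (forall i, F (x i)) -> E p -> order_converges E le x p -> F p.

Definition order_top (E : set (T -> R)) : set (set (T -> R)) :=
  [set U | U `<=` E /\ order_closed E (E `\` U)].

End Lspaces.

(* Main.v *)
Require Import Defs.
From HB Require Import structures.
From mathcomp Require Import all_boot all_order all_algebra.
From mathcomp Require Import all_classical all_reals all_analysis.
From mathcomp Require Import measurable_realfun.
Set Implicit Arguments.
Unset Strict Implicit.
Unset Printing Implicit Defensive.
Import Order.TTheory GRing.Theory Num.Theory.
Local Open Scope classical_set_scope.
Local Open Scope ring_scope.

Module B.
Section Basics.
Context {d : measure_display} {T : measurableType d} {R : realType}.
Context (mu : {measure set T -> \bar R}) (A : set T) (mA : measurable A).

Definition cut (f : T -> R) : T -> R := fun x => if x \in A then f x else 0.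

Lemma cutE f : cut f = f \* \1_A.
Proof.
apply/funext => x; rewrite /cut /= indicE; case: ifP => _; by rewrite ?mulr1 ?mulr0.
Qed.

Lemma measurable_cut f : measurable_fun setT f -> measurable_fun setT (cut f).
Proof. by move=> mf; rewrite cutE; apply: measurable_funM => //; exact: measurable_indic. Qed.

Lemma L1_meas f : L1 mu f -> measurable_fun setT f.
Proof. by move=> /integrableP[/measurable_EFinP]. Qed.

Lemma Linf_meas f : Linf mu f -> measurable_fun setT f.
Proof. by case. Qed.

Lemma ae_cut f : {ae mu, forall x, ~ A x -> f x = 0} -> {ae mu, forall x, cut f x = f x}.
Proof.
apply: filterS => x H; rewrite /cut; case: ifPn => // /negP xA.
by rewrite H // => Ax; apply: xA; rewrite inE.
Qed.

Lemma cut_off f : forall x, ~ A x -> cut f x = 0.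
Proof. by move=> x nA; rewrite /cut ifN //; apply/negP; rewrite inE. Qed.

Lemma ae_cut_off f : {ae mu, forall x, ~ A x -> cut f x = 0}.
Proof. by apply: nearW => x; exact: cut_off. Qed.

Lemma L1_cut f : L1 mu f -> L1_on mu A (cut f).
Proof.
move=> f1; have mf := L1_meas f1; split; last exact: ae_cut_off.
apply: le_integrable f1 => //.
  by apply/measurable_EFinP; apply: measurable_cut.
move=> x _ /=; rewrite /cut; case: ifP => _ //; by rewrite normr0 lee_fin.
Qed.

Lemma Linf_cut f : Linf mu f -> Linf_on mu A (cut f).
Proof.
move=> [mf [M HM]]; split; last exact: ae_cut_off.
split; first exact: measurable_cut.
exists (Num.max M 0); apply: filterS HM => x H; rewrite /cut; case: ifP => _.
  by rewrite le_max H.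
by rewrite normr0 le_max lexx orbT.
Qed.

Lemma cut_pairing f g : pairing mu (cut f) g = pairing mu f (cut g).
Proof.
rewrite /pairing; congr Rintegral; apply/funext => x; rewrite /cut.
by case: ifP => _; rewrite ?mul0r ?mulr0.
Qed.

Lemma pairing_ae (f f' g : T -> R) : measurable_fun setT f -> measurable_fun setT f' ->
  measurable_fun setT g -> {ae mu, forall x, f x = f' x} ->
  pairing mu f g = pairing mu f' g.
Proof.
move=> mf mf' mg H; rewrite /pairing /Rintegral; congr fine.
apply: ae_eq_integral => //.
- by apply/measurable_EFinP; apply: measurable_funM.
- by apply/measurable_EFinP; apply: measurable_funM.
- by apply: filterS H => x /= -> _.
Qed.

Lemma pairing_ae0 (f g : T -> R) : measurable_fun setT f -> 
  measurable_fun setT g -> {ae mu, forall x, f x = 0} ->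
  pairing mu f g = 0.
Proof.
move=> mf mg H; rewrite (pairing_ae (f' := fun=> 0)) //.
rewrite /pairing /Rintegral; under eq_integral do rewrite mul0r.
by rewrite integral0.
Qed.

End Basics.

End B.
Import B.


Section Generic.
Context {d : measure_display} {T : measurableType d} {R : realType}.
Context (mu : {measure set T -> \bar R}).

Lemma sat (S : set (T -> R)) P V f g : seminorm_topology S P V -> V f -> S g ->
  (forall p, P p -> p (g \- f) = 0) -> V g.
Proof.
move=> [_ HV] Vf Sg H0; have [ps [e [Hps e0 Hb]]] := HV f Vf.
by apply: Hb; split => // p /Hps /H0 ->.
Qed.

Lemma seq_lift (X Y : eqType) (Q : Y -> Prop) (F : Y -> X) (s' : seq X) :
  (forall x, x \in s' -> exists y, Q y /\ x = F y) ->
  exists s : seq Y, (forall y, y \in s -> Q y) /\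
    forall x, x \in s' -> exists y, y \in s /\ x = F y.
Proof.
elim: s' => [|x s' IH] H; first by exists [::]; split.
have [y [Qy ->]] := H x (mem_head _ _).
have [|s [Hs1 Hs2]] := IH; first by move=> z zs; apply: H; rewrite inE zs orbT.
exists (y :: s); split.
  by move=> z; rewrite inE => /orP[/eqP->|/Hs1].
move=> z; rewrite inE => /orP[/eqP->|/Hs2 [w [ws ->]]].
  by exists y; rewrite mem_head.
by exists w; rewrite inE ws orbT.
Qed.

Lemma meas_sub (f g : T -> R) : measurable_fun setT f -> measurable_fun setT g ->
  measurable_fun setT (f \- g).
Proof. by move=> mf mg; apply: measurable_funB. Qed.

Lemma pairingC f g : pairing mu f g = pairing mu g f.
Proof. by rewrite /pairing; congr Rintegral; apply/funext => x; rewrite mulrC. Qed.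

End Generic.


Section Part1.
Context {d : measure_display} {T : measurableType d} {R : realType}.
Context (mu : {measure set T -> \bar R}) (A : set T) (mA : measurable A).

Local Notation S1 := (L1_on mu A).
Local Notation Sinf := (Linf_on mu A).
Local Notation cut := (B.cut A).

Lemma vanish_sub (f g : T -> R) : {ae mu, forall x, ~ A x -> f x = 0} ->
  {ae mu, forall x, ~ A x -> g x = 0} -> {ae mu, forall x, ~ A x -> (f \- g) x = 0}.
Proof. by apply: filterS2 => x H1 H2 nA /=; rewrite H1 // H2 // subr0. Qed.

Lemma cut_sub (f g : T -> R) : cut f \- cut g = cut (f \- g).
Proof. by apply/funext => x; rewrite /= /B.cut; case: ifP => _ //; rewrite subr0. Qed.

Lemma weak_sat (F : set (T -> R)) (k : T -> R) (p : (T -> R) -> R) : (forall g, F g -> measurable_fun setT g) ->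
  [set p | exists g, F g /\ p = (fun f => `|pairing mu f g|)] p ->
  measurable_fun setT k -> {ae mu, forall x, k x = 0} -> p k = 0.
Proof.
move=> HF [g [Fg ->]] mk k0; rewrite (pairing_ae0 mk) ?normr0 //; exact: HF.
Qed.

Lemma weak_cut (F : set (T -> R)) (k : T -> R) (p : (T -> R) -> R) : (forall g, F g -> measurable_fun setT g) ->
  [set p | exists g, F g /\ p = (fun f => `|pairing mu f g|)] p ->
  measurable_fun setT k -> {ae mu, forall x, ~ A x -> k x = 0} -> p (cut k) = p k.
Proof.
move=> HF [g [Fg ->]] mk k0; rewrite (pairing_ae (f' := k)) //.
- exact: measurable_cut.
- exact: HF.
- exact: ae_cut.
Qed.

Lemma S1_meas (f : T -> R) : S1 f -> measurable_fun setT f.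
Proof. by move=> [/L1_meas]. Qed.
Lemma Sinf_meas (f : T -> R) : Sinf f -> measurable_fun setT f.
Proof. by move=> [[]]. Qed.

Lemma restr_open (U : set (T -> R)) : weak_top mu (L1 mu) (Linf mu) U -> weak_top mu S1 Sinf (U `&` S1).
Proof.
move=> [UL HU]; split; first by move=> x [].
move=> f [Uf S1f]; have [ps [e [Hps e0 Hb]]] := HU f Uf.
exists (map (fun p => fun h => p (cut h)) ps), e; split => //.
  move=> p' /mapP [p /Hps [g [Lg ->]] ->].
  exists (cut g); split; first exact: Linf_cut.
  by apply/funext => h; rewrite cut_pairing.
move=> h [S1h Hh]; split => //; apply: Hb; split; first by case: S1h.
move=> p ps_p; have := Hh _ (map_f (fun p => fun h => p (cut h)) ps_p) => /=.
rewrite (@weak_cut (Linf mu)) //.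
- by move=> g []. 
- exact: Hps.
- by apply: meas_sub; [exact: S1_meas|exact: S1_meas].
- by apply: vanish_sub; [case: S1h|case: S1f].
Qed.

Lemma pre_open (V : set (T -> R)) : weak_top mu S1 Sinf V ->
  weak_top mu (L1 mu) (Linf mu) [set h | L1 mu h /\ V (cut h)].
Proof.
move=> [VS HV]; split; first by move=> x [].
move=> h [Lh Vh]; have [ps [e [Hps e0 Hb]]] := HV _ Vh.
exists (map (fun p => fun k => p (cut k)) ps), e; split => //.
  move=> p' /mapP [p /Hps [g [Sg ->]] ->].
  exists (cut g); split; first by have [] := Linf_cut mA (proj1 Sg).
  by apply/funext => k; rewrite cut_pairing.
move=> k [Lk Hk]; split => //; apply: Hb; split; first exact: L1_cut.
move=> p ps_p; have := Hk _ (map_f (fun p => fun k => p (cut k)) ps_p) => /=.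
by rewrite cut_sub.
Qed.

Lemma part1 : restrict_top (weak_top mu (L1 mu) (Linf mu)) S1 = weak_top mu S1 Sinf.
Proof.
apply/seteqP; split => V.
  by move=> [U [HU ->]]; exact: restr_open.
move=> HV; exists [set h | L1 mu h /\ V (cut h)]; split; first exact: pre_open.
have VS : V `<=` S1 by case: HV.
have Hsat : forall f g, V f -> S1 g -> {ae mu, forall x, g x = f x} -> V g.
  move=> f g Vf S1g gf; apply: (sat HV Vf) => // p Pp.
  apply: (weak_sat _ Pp).
  - by move=> k Sk; exact: Sinf_meas.
  - by apply: meas_sub; [exact: S1_meas|exact: S1_meas (VS f Vf)].
  - by apply: filterS gf => x /= ->; rewrite subrr.
apply/seteqP; split => f.
  move=> Vf; have [Lf Af] := VS f Vf.
  split; last exact: VS.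
  split => //; apply: (Hsat f) => //; first exact: L1_cut.
  exact: ae_cut.
move=> [[Lf Vcf] S1f]; apply: (Hsat (cut f)) => //.
apply: filterS (ae_cut (proj2 S1f)) => x /= ->//.
Qed.

End Part1.


Section Part2.
Context {d : measure_display} {T : measurableType d} {R : realType}.
Context (mu : {measure set T -> \bar R}) (A : set T) (mA : measurable A).

Local Notation S1 := (L1_on mu A).
Local Notation Sinf := (Linf_on mu A).
Local Notation cut := (B.cut A).

Definition PM (E F : set (T -> R)) : set ((T -> R) -> R) :=
  [set p | exists K, [/\ K `<=` F, absolutely_convex K,
                        compact_wrt (weak_top mu F E) K &
                        p = (fun f => sup [set `|pairing mu f g| | g in K])]].

Lemma sup_eq (K : set (T -> R)) (k k' : T -> R) :
  (forall g, K g -> pairing mu k g = pairing mu k' g) ->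
  sup [set `|pairing mu k g| | g in K] = sup [set `|pairing mu k' g| | g in K].
Proof.
move=> H; congr sup; apply/seteqP; split => _ [g Kg <-]; exists g => //.
  by rewrite H.
by rewrite H.
Qed.

Lemma sup_zero (K : set (T -> R)) (k : T -> R) :
  (forall g, K g -> pairing mu k g = 0) ->
  sup [set `|pairing mu k g| | g in K] = 0.
Proof.
move=> H; have [->|/set0P [g0 Kg0]] := eqVneq K set0.
  rewrite image_set0.
by rewrite sup0.
have -> : [set `|pairing mu k g| | g in K] = [set 0].
  apply/seteqP; split => [_ [g Kg <-]|_ ->]; first by rewrite /= H ?normr0.
  by exists g0 => //; rewrite H ?normr0.
by rewrite sup1.
Qed.


Lemma S1_meas' (f : T -> R) : S1 f -> measurable_fun setT f.
Proof. by move=> [/L1_meas]. Qed.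

Lemma ac_cut (K : set (T -> R)) : absolutely_convex K -> absolutely_convex (cut @` K).
Proof.
move=> acK _ _ a b [g1 K1 <-] [g2 K2 <-] ab.
exists (fun x => a * g1 x + b * g2 x); first exact: acK.
by apply/funext => x; rewrite /B.cut; case: ifP => _ //; rewrite !mulr0 addr0.
Qed.

Lemma compact_cut (K : set (T -> R)) : K `<=` L1 mu ->
  compact_wrt (weak_top mu (L1 mu) (Linf mu)) K ->
  compact_wrt (weak_top mu S1 Sinf) (cut @` K).
Proof.
move=> KL cK C CO Kcov.
pose pre := fun W : set (T -> R) => [set h | L1 mu h /\ W (cut h)].
have sub : [set W' | exists W, C W /\ W' = pre W] `<=` weak_top mu (L1 mu) (Linf mu).
  by move=> _ [W [CW ->]]; exact: (pre_open mA (CO W CW)).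
have cov : K `<=` \bigcup_(U in [set W' | exists W, C W /\ W' = pre W]) U.
  move=> g Kg; have [W CW Wcg] := Kcov (cut g) (ex_intro2 _ _ g Kg erefl).
  by exists (pre W); [exists W|split => //; exact: KL].
have [s' [Hs' Kc']] := cK _ sub cov.
have [s [Hs1 Hs2]] := seq_lift Hs'.
exists s; split => // _ [g Kg <-].
have [W' W's' W'g] := Kc' g Kg; have [W [Ws eW]] := Hs2 W' W's'.
by exists W => //; move: W'g; rewrite eW => -[].
Qed.

Lemma compact_up (K : set (T -> R)) : K `<=` S1 ->
  compact_wrt (weak_top mu S1 Sinf) K ->
  compact_wrt (weak_top mu (L1 mu) (Linf mu)) K.
Proof.
move=> KS cK C CO Kcov.
have sub : [set W' | exists W, C W /\ W' = W `&` S1] `<=` weak_top mu S1 Sinf.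
  by move=> _ [W [CW ->]]; exact: (restr_open mA (CO W CW)).
have cov : K `<=` \bigcup_(U in [set W' | exists W, C W /\ W' = W `&` S1]) U.
  move=> g Kg; have [W CW Wg] := Kcov g Kg.
  by exists (W `&` S1); [exists W|split => //; exact: KS].
have [s' [Hs' Kc']] := cK _ sub cov.
have [s [Hs1 Hs2]] := seq_lift Hs'.
exists s; split => // g Kg.
have [W' W's' W'g] := Kc' g Kg; have [W [Ws eW]] := Hs2 W' W's'.
by exists W => //; move: W'g; rewrite eW => -[].
Qed.

Lemma mackey_sat (E F : set (T -> R)) (p : (T -> R) -> R) (k : T -> R) :
  (forall g, F g -> measurable_fun setT g) -> PM E F p ->
  measurable_fun setT k -> {ae mu, forall x, k x = 0} -> p k = 0.
Proof.
move=> HF [K [KF _ _ ->]] mk k0; apply: sup_zero => g Kg.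
by apply: pairing_ae0 => //; apply: HF; apply: KF.
Qed.

Lemma mackey_cut (E F : set (T -> R)) (p : (T -> R) -> R) (k : T -> R) :
  (forall g, F g -> measurable_fun setT g) -> PM E F p ->
  measurable_fun setT k -> {ae mu, forall x, ~ A x -> k x = 0} -> p (cut k) = p k.
Proof.
move=> HF [K [KF _ _ ->]] mk k0; apply: sup_eq => g Kg.
apply: pairing_ae => //.
- exact: measurable_cut.
- by apply: HF; apply: KF.
- exact: ae_cut.
Qed.

Lemma mackey_cutF (E : set (T -> R)) (p : (T -> R) -> R) (k : T -> R) :
  PM E S1 p -> measurable_fun setT k -> p (cut k) = p k.
Proof.
move=> [K [KF _ _ ->]] mk; apply: sup_eq => g Kg.
have [Lg Ag] := KF g Kg.
rewrite cut_pairing pairingC [RHS]pairingC; apply: pairing_ae => //.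
- have := L1_meas Lg; exact: measurable_cut.
- exact: L1_meas Lg.
- exact: ae_cut.
Qed.

Lemma part2 : restrict_top (mackey_top mu (Linf mu) (L1 mu)) Sinf
        = mackey_top mu Sinf S1.
Proof.
apply/seteqP; split => V.
  move=> [U [[UL HU] ->]]; split; first by move=> x [].
  move=> f [Uf Sf]; have [ps [e [Hps e0 Hb]]] := HU f Uf.
  exists (map (fun p => fun h => p (cut h)) ps), e; split => //.
    move=> p' /mapP [p /Hps [K [KL acK cK ->]] ->].
    exists (cut @` K); split.
    - by move=> _ [g Kg <-]; apply: L1_cut => //; exact: KL.
    - exact: ac_cut.
    - exact: compact_cut.
    - apply/funext => h; congr sup; apply/seteqP; split => _ [g Kg <-].
        by exists (cut g); [exists g|rewrite cut_pairing].
      by move: Kg => [g' Kg' <-]; exists g' => //; rewrite cut_pairing.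
  move=> h [Sh Hh]; split => //; apply: Hb; split; first by case: Sh.
  move=> p ps_p; have := Hh _ (map_f (fun p => fun h => p (cut h)) ps_p) => /=.
  rewrite (@mackey_cut (Linf mu) (L1 mu)) //.
  - by move=> g; exact: L1_meas.
  - exact: Hps.
  - by apply: meas_sub; [case: Sh => -[]|case: Sf => -[]].
  - by apply: vanish_sub; [case: Sh|case: Sf].
move=> HV; have VS : V `<=` Sinf by case: HV.
exists [set h | Linf mu h /\ V (cut h)]; split.
  split; first by move=> x [].
  move=> h [Lh Vh]; have [ps [e [Hps e0 Hb]]] := HV.2 _ Vh.
  exists ps, e; split => //.
    move=> p /Hps [K [KS acK cK ->]]; exists K; split => //.
    - by move=> g /KS [].
    - exact: compact_up.
  move=> k [Lk Hk]; split => //; apply: Hb; split; first exact: Linf_cut.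
  move=> p ps_p; rewrite cut_sub (mackey_cutF (E := Sinf)).
  - exact: Hk.
  - exact: Hps.
  - by apply: meas_sub; [case: Lk|case: Lh].
have Hsat : forall f g, V f -> Sinf g -> {ae mu, forall x, g x = f x} -> V g.
  move=> f g Vf Sg gf; apply: (sat HV Vf) => // p Pp.
  apply: (mackey_sat (E := Sinf) (F := S1) _ Pp).
  - by move=> k Sk; exact: S1_meas'.
  - by apply: meas_sub; [case: Sg => -[]|case: (VS f Vf) => -[]].
  - by apply: filterS gf => x /= ->; rewrite subrr.
apply/seteqP; split => f.
  move=> Vf; have [Lf Af] := VS f Vf.
  split; last exact: VS.
  split => //; apply: (Hsat f) => //; first exact: Linf_cut.
  exact: ae_cut.
move=> [[Lf Vcf] Sf]; apply: (Hsat (cut f)) => //.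
apply: filterS (ae_cut (proj2 Sf)) => x /= ->//.
Qed.

End Part2.


Section Part3.
Context {d : measure_display} {T : measurableType d} {R : realType}.
Context (mu : {measure set T -> \bar R}) (A : set T) (mA : measurable A).

Local Notation Sinf := (Linf_on mu A).
Local Notation cut := (B.cut A).
Local Notation ae_le := (ae_le mu).

Lemma ae_and (P Q : T -> Prop) : {ae mu, forall x, P x} -> {ae mu, forall x, Q x} ->
  {ae mu, forall x, P x /\ Q x}.
Proof. by apply: filterS2 => x a b. Qed.

Lemma ae_le_trans (f g h : T -> R) : ae_le f g -> ae_le g h -> ae_le f h.
Proof. by apply: filterS2 => x; exact: le_trans. Qed.

Lemma ae_le_eq (f g : T -> R) : {ae mu, forall x, f x = g x} -> ae_le f g.
Proof. by apply: filterS => x ->. Qed.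

Lemma ae_le_eq' (f g : T -> R) : {ae mu, forall x, f x = g x} -> ae_le g f.
Proof. by apply: filterS => x ->. Qed.

Lemma cut_le (f g : T -> R) : ae_le f g -> ae_le (cut f) (cut g).
Proof. by apply: filterS => x H; rewrite /B.cut; case: ifP. Qed.

Lemma cut_Sinf_eq (f : T -> R) : Sinf f -> {ae mu, forall x, cut f x = f x}.
Proof. by move=> [_ H]; exact: ae_cut. Qed.

Lemma L_up (I : Type) (le : I -> I -> Prop) (x : I -> T -> R) (p : T -> R) :
  inhabited I -> order_converges mu Sinf le x p -> order_converges mu (Linf mu) le x p.
Proof.
move=> [i0] [y [z [Hyz [ymono [Sp yle ysup]] [zanti [_ zle zinf]] sand]]].
exists y, z; split => //.
- by move=> i; have [[a _] [b _]] := Hyz i.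
- split => //; split => //; first by case: Sp.
  move=> q Lq Hq.
  have Hcq : ae_le p (cut q).
    apply: ysup; first exact: Linf_cut.
    move=> i; have [[_ yA] _] := Hyz i.
    apply: filterS2 (Hq i) yA => t h1 h2; rewrite /B.cut; case: ifPn => // /negP tA.
    by rewrite h2 // => At; apply: tA; rewrite inE.
  have [[_ yA] _] := Hyz i0.
  apply: filterS3 Hcq (ae_and (Hq i0) yA) (Sp.2) => t h1 [h2 h3] h4.
  case: (pselect (A t)) => At.
    by move: h1; rewrite /B.cut ifT // inE.
  by rewrite h4 // -(h3 At).
- split => //; split => //; first by case: Sp.
  move=> q Lq Hq.
  have Hcq : ae_le (cut q) p.
    apply: zinf; first exact: Linf_cut.
    move=> i; have [_ [_ zA]] := Hyz i.
    apply: filterS2 (Hq i) zA => t h1 h2; rewrite /B.cut; case: ifPn => // /negP tA.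
    by rewrite h2 // => At; apply: tA; rewrite inE.
  have [_ [_ zA]] := Hyz i0.
  apply: filterS3 Hcq (ae_and (Hq i0) zA) (Sp.2) => t h1 [h2 h3] h4.
  case: (pselect (A t)) => At.
    by move: h1; rewrite /B.cut ifT // inE.
  by rewrite h4 // -(h3 At).
Qed.


Lemma L_down (I : Type) (le : I -> I -> Prop) (x : I -> T -> R) (p : T -> R) :
  directed le -> (forall i, Sinf (x i)) -> Linf mu p ->
  order_converges mu (Linf mu) le x p ->
  Sinf p /\ order_converges mu Sinf le x p.
Proof.
move=> [_ _ _ dir] Sx Lp [y [z [Hyz [ymono [_ yle ysup]] [zanti [_ zle zinf]] [i0 sand]]]].
have yneg : forall i, {ae mu, forall t, ~ A t -> y i t <= 0}.
  move=> i; have [k [ik i0k]] := dir i i0.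
  have [yx _] := sand k i0k.
  apply: filterS3 (ymono _ _ ik) yx (proj2 (Sx k)) => t h1 h2 h3 nA.
  by rewrite -(h3 nA); exact: le_trans h2.
have zpos : forall i, {ae mu, forall t, ~ A t -> 0 <= z i t}.
  move=> i; have [k [ik i0k]] := dir i i0.
  have [_ xz] := sand k i0k.
  apply: filterS3 (zanti _ _ ik) xz (proj2 (Sx k)) => t h1 h2 h3 nA.
  by rewrite -(h3 nA); exact: le_trans h1.
have Lcp : Linf mu (cut p) by have [] := Linf_cut mA Lp.
have h1 : ae_le p (cut p).
  apply: ysup => // i; apply: filterS2 (yle i) (yneg i) => t a b.
  rewrite /B.cut; case: ifPn => // /negP tA; apply: b => At; apply: tA; by rewrite inE.
have h2 : ae_le (cut p) p.
  apply: zinf => // i; apply: filterS2 (zle i) (zpos i) => t a b.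
  rewrite /B.cut; case: ifPn => // /negP tA; apply: b => At; apply: tA; by rewrite inE.
have Sp : Sinf p.
  split => //; apply: filterS2 h1 h2 => t a b nA.
  by apply/eqP; rewrite eq_le; move: a b; rewrite (cut_off _ nA) => -> ->.
split => //.
have Ly : forall i, Linf mu (y i) by move=> i; case: (Hyz i).
have Lz : forall i, Linf mu (z i) by move=> i; case: (Hyz i).
exists (fun i => cut (y i)), (fun i => cut (z i)); split.
- by move=> i; split; apply: Linf_cut.
- split; first by move=> i j ij; apply: cut_le; exact: ymono.
  split => //.
    move=> i; apply: ae_le_trans (cut_le (yle i)) _; exact: ae_le_eq (cut_Sinf_eq Sp).
  move=> q Sq Hq; apply: ysup; first by case: Sq.
  move=> i; apply: filterS3 (Hq i) (yneg i) (proj2 Sq) => t a b c.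
  case: (pselect (A t)) => At.
    by move: a; rewrite /B.cut ifT // inE.
  by rewrite c //; exact: b.
- split; first by move=> i j ij; apply: cut_le; exact: zanti.
  split => //.
    move=> i; apply: ae_le_trans _ (cut_le (zle i)); exact: ae_le_eq' (cut_Sinf_eq Sp).
  move=> q Sq Hq; apply: zinf; first by case: Sq.
  move=> i; apply: filterS3 (Hq i) (zpos i) (proj2 Sq) => t a b c.
  case: (pselect (A t)) => At.
    by move: a; rewrite /B.cut ifT // inE.
  by rewrite c //; exact: b.
- exists i0 => i /sand [a b]; split.
    apply: ae_le_trans (cut_le a) _; exact: ae_le_eq (cut_Sinf_eq (Sx i)).
  apply: ae_le_trans _ (cut_le b); exact: ae_le_eq' (cut_Sinf_eq (Sx i)).
Qed.

Lemma part3 : order_top mu Sinf = restrict_top (order_top mu (Linf mu)) Sinf.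
Proof.
apply/seteqP; split => V.
  move=> [VS [_ Vcl]].
  exists (V `|` (Linf mu `\` Sinf)); split.
    split; first by move=> f [/VS []|[]].
    split; first by move=> f [].
    move=> I le x p dir Hx Lp oc.
    have Sx : forall i, Sinf (x i).
      move=> i; have [Lx nU] := Hx i.
      by apply: contrapT => nS; apply: nU; right.
    have [Sp oc'] := L_down dir Sx Lp oc.
    have := Vcl I le x p dir _ Sp oc'.
    case=> [i|_ nVp]; first by split => // Vx; have [_ ] := Hx i; apply; left.
    by split => // -[//|[]].
  apply/seteqP; split => f.
    by move=> Vf; split; [left|exact: VS].
  by move=> [[//|[]]].
move=> [U [[UL [_ Ucl]] ->]]; split; first by move=> f [].
split; first by move=> f [].
move=> I le x p dir Hx Sp oc.
have [_ _ inh _] := dir.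
have oc' := L_up inh oc.
have [Lp nUp] : (Linf mu `\` U) p.
  apply: Ucl dir _ _ oc'; last by case: Sp.
  move=> i; have [Sxi nV] := Hx i; split; first by case: Sxi.
  by move=> Ux; apply: nV.
by split => // -[].
Qed.

End Part3.

Theorem mainTheorem9 (d : measure_display) (T : measurableType d) (R : realType)
  (mu : {measure set T -> \bar R}) (A : set T) :
  semi_finite mu -> measurable A ->
  [/\ restrict_top (weak_top mu (L1 mu) (Linf mu)) (L1_on mu A)
        = weak_top mu (L1_on mu A) (Linf_on mu A),
      restrict_top (mackey_top mu (Linf mu) (L1 mu)) (Linf_on mu A)
        = mackey_top mu (Linf_on mu A) (L1_on mu A) &
      order_top mu (Linf_on mu A)
        = restrict_top (order_top mu (Linf mu)) (Linf_on mu A)].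
Proof.
move=> _ mA; split; [exact: part1 mA|exact: part2 mA|exact: part3 mA].
Qed.
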